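(* In each iteration of Algorithm 1, $i_R=b(i^* )$; that is, for the set $S$ immediately before this iteration, none of the indices $j$ with $i^*\le j<b(i^* )$ belongs to $S$, and $b(i^* )\in S$.
   Context: Problem (P): given an integer $n\ge1$, reals $0<q_1\le\cdots\le q_n$, $z_1,\dots,z_n>0$ and $K>0$, maximize $\sum_{i=1}^n x_i$ subject to $0\le x_i\le q_i$, $0\le x_1\le\cdots\le x_n$, $\sum_{i=1}^n z_ix_i\le K$. For $1\le i<j\le n+1$ let $\mathrm{sum}(i,j)=z_i+\cdots+z_{j-1}$ and $\mathrm{avg}(i,j)=\mathrm{sum}(i,j)/(j-i)$. Algorithm 1 (run on an instance of (P)): Initialize $S=\{0,n+1\}$, $y_i=\mathrm{avg}(i,n+1)$ and $x_i=0$ for $i=1,\dots,n$, and $\hat B=K$. While $\hat B>0$ and $S\ne\{0,1,\dots,n+1\}$, perform an iteration: let $i^*$ be the index $i\in\{1,\dots,n\}\setminus S$ minimizing $y_i$, ties broken in favour of the smallest index; let $i_L=\max\{j\in S:j<i^*\}$ and $i_R=\min\{j\in S:j>i^*\}$; set $d=\min\{\hat B/((i_R-i^* )y_{i^*}),\ q_{i^*}-x_{i^*}\}$; set $\hat B\leftarrow\hat B-d(i_R-i^* )y_{i^*}$; set $x_i\leftarrow x_i+d$ for all $i^*\le i<i_R$; set $y_i\leftarrow\mathrm{avg}(i,i^* )$ for all $i_L<i<i^*$; add $i^*$ to $S$. Finally output $x_1,\dots,x_n$. Blocker: for $1\le i\le n$, $b(i)$ is the value of $i^*$ in the last iteration in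 which $y_i$ is updated (i.e. the last iteration with $i_L<i<i^*$); if $y_i$ is never updated, $b(i)=n+1$. *)

(* Defs.v *)
From mathcomp Require Import all_boot all_order all_algebra.
Set Implicit Arguments. Unset Strict Implicit. Unset Printing Implicit Defensive.
Import Order.TTheory GRing.Theory Num.Theory.
Local Open Scope ring_scope.

(* State of the algorithm: the set S (as a predicate on nat), the vectors
   y and x (indexed by nat; only indices 1..n are meaningful), and B-hat. *)
Record state (R : Type) := State {
  sS : nat -> bool;
  sy : nat -> R;
  sx : nat -> R;
  sB : R }.

Section Alg.
Variable R : realFieldType.
Variable n : nat.
Variables (q z : nat -> R) (K : R).

Definition zsum (i j : nat) : R := \sum_(i <= k < j) z k.
Definition avg (i j : nat) : R := zsum i j / (j - i)%:R.

Definition cand (st : state R) : seq nat := [seq i <- iota 1 n | ~~ sS st i].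

(* i* : the index of {1..n}\S minimizing y, ties broken by smallest index *)
Definition istar (st : state R) : nat :=
  let c := cand st in
  nth 0%N c (find (fun i => all (fun j => sy st i <= sy st j) c) c).

Definition iL (st : state R) (i : nat) : nat := (\max_(j < i | sS st j) j)%N.

(* i_R = min { j in S | j > i }, searched among i+1, ..., n+1 *)
Definition iR (st : state R) (i : nat) : nat :=
  (i.+1 + find (sS st) (iota i.+1 (n.+1 - i)))%N.

Definition cond (st : state R) : bool :=
  (0 < sB st) && has (fun j => ~~ sS st j) (iota 0 n.+2).

Definition step (st : state R) : state R :=
  let i := istar st in
  let l := iL st i in
  let r := iR st i in
  let yi := sy st i in
  let d := Num.min (sB st / ((r - i)%:R * yi)) (q i - sx st i) in
  State (fun j => sS st j || (j == i))
        (fun j => if (l < j < i)%N then avg j i else sy st j)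
        (fun j => if (i <= j < r)%N then sx st j + d else sx st j)
        (sB st - d * (r - i)%:R * yi).

Definition init : state R :=
  State (fun j => (j == 0%N) || (j == n.+1)) (fun i => avg i n.+1) (fun _ => 0) K.

(* state immediately before iteration k (k = 0, 1, ...) *)
Definition traj (k : nat) : state R := iter k step init.

Definition performed (k : nat) : Prop := forall j, (j <= k)%N -> cond (traj j).

(* iteration k updates y_i, i.e. i_L < i < i* in that iteration *)
Definition updates (k i : nat) : bool :=
  let st := traj k in (iL st (istar st) < i < istar st)%N.

(* b(i) = v : v is the value of i* in the last iteration updating y_i,
   or n+1 if y_i is never updated *)
Definition is_blocker (i v : nat) : Prop :=
  (exists k, [/\ performed k, updates k i, istar (traj k) = v &
              forall k', (k < k')%N -> performed k' -> ~~ updates k' i])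
  \/ ((forall k, performed k -> ~~ updates k i) /\ v = n.+1).

End Alg.

(* Main.v *)
Require Import Defs.
From mathcomp Require Import all_boot all_order all_algebra.
From mathcomp Require Import zify.
Import Order.TTheory GRing.Theory Num.Theory.
Local Open Scope ring_scope.

Section Helpers.
Set Implicit Arguments. Unset Strict Implicit.
Variable R : realFieldType.
Variable n : nat.
Variables (q z : nat -> R) (K : R).

Local Notation traj := (traj n q z K).
Local Notation S t := (sS (traj t)).
Local Notation a t := (istar n (traj t)).

Lemma SS t j : S t.+1 j = S t j || (j == a t).
Proof. by []. Qed.

Lemma S_mono t t' j : (t <= t')%N -> S t j -> S t' j.
Proof.
move=> /subnK <-; elim: (t' - t)%N => [//|d IH] Hj.
by rewrite addSn SS IH.
Qed.

Lemma S0 t : S t 0 && S t n.+1.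
Proof.
elim: t => [|t IH]; first by rewrite /= !eqxx ?orbT.
by rewrite !SS; case/andP: IH => -> ->.
Qed.

Lemma exmin (f : nat -> R) {c : seq nat} : c != [::] ->
  exists2 x, x \in c & all (fun j => f x <= f j) c.
Proof.
elim: c => //= y c IH _.
case: (eqVneq c [::]) => [->|/IH [x xc xall]].
  by exists y; rewrite ?inE ?eqxx //= lexx.
case: (leP (f y) (f x)) => h.
  exists y; first by rewrite inE eqxx.
  rewrite /= lexx /=; apply/allP => j /(allP xall); exact: le_trans.
by exists x; rewrite ?inE ?xc ?orbT //= (ltW h) xall.
Qed.

Lemma istar_spec (st : state R) : sS st 0 -> sS st n.+1 -> cond n st ->
  (1 <= istar n st <= n)%N /\ ~~ sS st (istar n st).
Proof.
move=> h0 hn /andP[_ /hasP[j]]; rewrite mem_iota add0n => /andP[_ hj] hSj.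
have j0 : j != 0%N by apply: contraNneq hSj => ->.
have jn : j != n.+1 by apply: contraNneq hSj => ->.
have jc : j \in cand n st.
  rewrite /cand mem_filter hSj mem_iota /=; lia.
have cn : cand n st != [::] by apply: contraTneq jc => ->.
have [x xc xall] := exmin (sy st) cn.
have hp : has (fun i => all (fun j => sy st i <= sy st j) (cand n st)) (cand n st).
  by apply/hasP; exists x.
have : istar n st \in cand n st by rewrite /istar mem_nth // -has_find.
rewrite /cand mem_filter mem_iota => /andP[-> h]; split => //; lia.
Qed.

Lemma iR_eq (st : state R) i r : (i < r <= n.+1)%N -> sS st r ->
  (forall j, (i < j < r)%N -> ~~ sS st j) -> iR n st i = r.
Proof.
move=> /andP[ir rn] hr hgap; rewrite /iR.
have -> : (n.+1 - i = (r - i.+1) + (n.+2 - r))%N by lia.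
rewrite iotaD find_cat.
have -> : has (sS st) (iota i.+1 (r - i.+1)) = false.
  apply/negbTE/hasPn => j; rewrite mem_iota => /andP[h1 h2]; apply: hgap; lia.
rewrite size_iota (_ : (i.+1 + (r - i.+1))%N = r); last lia.
have -> : (n.+2 - r = (n.+2 - r).-1.+1)%N by lia.
rewrite /= hr; lia.
Qed.

Lemma iR_spec (st : state R) i : (i <= n)%N -> sS st n.+1 ->
  [/\ (i < iR n st i <= n.+1)%N, sS st (iR n st i) &
      forall j, (i < j < iR n st i)%N -> ~~ sS st j].
Proof.
move=> hi hn.
set s := iota i.+1 (n.+1 - i).
have hs : has (sS st) s.
  apply/hasP; exists n.+1 => //; rewrite mem_iota; lia.
have hf : (find (sS st) s < n.+1 - i)%N by rewrite -(size_iota i.+1 (n.+1 - i)) -has_find.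
rewrite /iR -/s; split.
- lia.
- by have := nth_find 0%N hs; rewrite nth_iota.
- move=> j hj.
  have := @before_find _ 0%N (sS st) s (j - i.+1)%N.
  rewrite nth_iota; last lia.
  rewrite (_ : (i.+1 + (j - i.+1))%N = j); last lia.
  move=> -> //; lia.
Qed.

Lemma U1 (st : state R) x i j : (iL st x < i)%N -> (j < x)%N -> sS st j -> (j < i)%N.
Proof.
move=> h hj hS.
apply: leq_ltn_trans h.
exact: (@leq_bigmax_cond _ (fun k : 'I_x => sS st k) (fun k : 'I_x => nat_of_ord k) (Ordinal hj) hS).
Qed.

Lemma U2 (st : state R) x i : (0 < i)%N ->
  (forall j, (j < x)%N -> sS st j -> (j < i)%N) -> (iL st x < i)%N.
Proof.
move=> i0 H.
suff : (iL st x <= i.-1)%N by lia.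
apply/bigmax_leqP => k hk; have := H k (ltn_ord k) hk; lia.
Qed.

Lemma not_upd_after i k t : a k = i -> (k <= t)%N -> ~~ updates n q z K t i.
Proof.
move=> hai hkt; rewrite /updates; apply/negP => /andP[h1 h2].
case: (leqP t k) => htk.
  have ht : t = k by lia.
  by subst t; rewrite hai ltnn in h2.
have hS : S t i.
  apply: (@S_mono k.+1) => //. by rewrite SS hai eqxx orbT.
by have := U1 h1 h2 hS; rewrite ltnn.
Qed.

Lemma main_ind i k : performed n q z K k -> a k = i -> forall t, (t <= k)%N ->
  (exists t0, [/\ (t0 < t)%N, updates n q z K t0 i, a t0 = iR n (traj t) i &
     forall t', (t0 < t' < t)%N -> ~~ updates n q z K t' i])
  \/ ((forall t', (t' < t)%N -> ~~ updates n q z K t' i) /\ iR n (traj t) i = n.+1).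
Proof.
move=> hk hai.
have [hi hSi] : (1 <= i <= n)%N /\ ~~ S k i.
  by rewrite -hai; case/andP: (S0 k) => h0 h1; apply: istar_spec => //; exact: hk.
have hnS : forall t, (t <= k)%N -> ~~ S t i.
  by move=> t htk; apply: contra hSi; apply: S_mono.
elim => [_|t IH htk].
  right; split => [t' //|].
  apply: iR_eq; first lia.
    by case/andP: (S0 0).
  move=> j hj /=; apply/negP => /orP[/eqP|/eqP]; lia.
have IH' := IH (ltnW htk).
have [a0 a1] : (1 <= a t <= n)%N /\ ~~ S t (a t).
  by case/andP: (S0 t) => h0 h1; apply: istar_spec => //; apply: hk; lia.
have hit := hnS t (ltnW htk).
have [hr1 hr2 hr3] := iR_spec (st := traj t) (i := i) (ltac:(lia)) (proj2 (andP (S0 t))).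
case hu: (updates n q z K t i).
  left; exists t; split => //; last by move=> t'; lia.
  have [hu1 hu2] := andP hu.
  symmetry; apply: iR_eq.
  - lia.
  - by rewrite SS eqxx orbT.
  - move=> j hj; rewrite SS negb_or; apply/andP; split.
      by apply/negP => hS; have := U1 hu1 (ltac:(lia) : (j < a t)%N) hS; lia.
    apply/eqP; lia.
have hR : iR n (traj t.+1) i = iR n (traj t) i.
  apply: iR_eq => //.
  - by rewrite SS hr2.
  - move=> j hj; rewrite SS negb_or hr3 //=.
    apply/negP => /eqP hja.
    move/negP: hu; apply; rewrite /updates.
    apply/andP; split; last lia.
    apply: U2; first lia.
    move=> j' hj' hS.
    case: (ltngtP j' i) => // hh.
      by have := hr3 j' (ltac:(lia)); rewrite hS.
    by subst j'; rewrite hS in hit.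
rewrite hR.
case: IH' => [[t0 [h1 h2 h3 h4]]|[h1 h2]].
  left; exists t0; split => //; first lia.
  move=> t' ht'; case: (ltnP t' t) => h.
    apply: h4; lia.
  have -> : t' = t by lia.
  by rewrite hu.
right; split => // t' ht'; case: (ltnP t' t) => h; first exact: h1.
have -> : t' = t by lia.
by rewrite hu.
Qed.

End Helpers.
Unset Implicit Arguments. Set Strict Implicit.

Theorem lemma7 (R : realFieldType) (n : nat) (q z : nat -> R) (K : R)
  (hn : (1 <= n)%N)
  (hq1 : 0 < q 1%N)
  (hqmono : forall i, (1 <= i < n)%N -> q i <= q i.+1)
  (hz : forall i, (1 <= i <= n)%N -> 0 < z i)
  (hK : 0 < K)
  (k : nat) (hk : performed n q z K k) :
  let st := traj n q z K k in
  let i := istar n st in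
  is_blocker n q z K i (iR n st i) /\
  (forall j, (i <= j < iR n st i)%N -> ~~ sS st j) /\ sS st (iR n st i).
Proof.
move=> st i.
have hk' : cond n (traj n q z K k) := hk k (leqnn k).
have [h0 hn1] := andP (S0 n q z K k).
have [hi hSi] := istar_spec h0 hn1 hk'.
have [hr1 hr2 hr3] := @iR_spec R n (traj n q z K k) i (ltac:(by case/andP: hi)) hn1.
split; [|split] => //.
- rewrite /is_blocker.
  case: (main_ind hk (erefl (istar n (traj n q z K k))) (leqnn k)) => [[t0 [h1 h2 h3 h4]]|[h1 h2]].
    left; exists t0; split => //.
    + by move=> j hj; apply: hk; lia.
    + move=> k' hkk _; case: (ltnP k' k) => h; first by apply: h4; lia.
      exact: not_upd_after.
  right; split => // k' _; case: (ltnP k' k) => h; first exact: h1.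
  exact: not_upd_after.
- move=> j hj; case: (eqVneq j i) => [->|hne]; first exact: hSi.
  apply: hr3; rewrite /i /st in hj hne *; lia.
Qed.
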